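(* Let $A$ be a $2\times n$ array with pairwise distinct entries and let $k\ge 1$. The DAG $D^k_A$ has at most $6kn$ nodes.
   Context: For a $2\times n$ array $A$ with distinct entries from a total order and $1\le a\le b\le n$, let Top-$k([a,b])$ denote the set of positions of the $k$ largest values in $A[1..2][a..b]$ (rows 1 and 2, columns $a..b$). The DAG $D^k_A$ has nodes labelled by intervals $[a,b]$, $1\le a\le b\le n$, with nodes identified by their labels, defined inductively: the root is $[1,n]$; a node $[a,b]$ is a leaf (has no children) if $2(b-a+1)\le k$; otherwise, letting $a'$ and $b'$ ($a\le a'\le b'\le b$) be the smallest and largest column indices among the positions in Top-$k([a,b])$, the node $[a,b]$ has left child $[a,b'-1]$ if $a<b'$ and right child $[a'+1,b]$ if $a'<b$. The nodes of $D^k_A$ are exactly those reachable from the root. *)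

(* Defs.v *)
From HB Require Import structures.
From mathcomp Require Import all_boot all_order.
Set Implicit Arguments. Unset Strict Implicit. Unset Printing Implicit Defensive.
Import Order.TTheory.

(* A 2 x n array is a function A : nat -> nat -> T, where A r c is the entry
   in row r (r = 1 or 2) and column c (1 <= c <= n); values outside this
   range are irrelevant. *)

Section DAG.
Context {disp : Order.disp_t} {T : orderType disp}.
Variables (n k : nat) (A : nat -> nat -> T).

Definition valid_pos (r c : nat) : bool := (1 <= r <= 2) && (1 <= c <= n).

Definition distinct_entries : Prop :=
  forall r c r' c', valid_pos r c -> valid_pos r' c' ->
    A r c = A r' c' -> r = r' /\ c = c'.

Definition nlarger (a b r c : nat) : nat :=
  \sum_(1 <= r' < 3) \sum_(a <= c' < b.+1) ((A r c < A r' c')%O : nat).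

(* (r,c) belongs to Top-k([a,b]): it is in the subarray and fewer than k
   entries of the subarray are larger (with distinct entries this is exactly
   the set of positions of the k largest values). *)
Definition inTopk (a b r c : nat) : bool :=
  [&& 1 <= r <= 2, a <= c <= b & nlarger a b r c < k].

Definition colTop (a b c : nat) : bool := inTopk a b 1 c || inTopk a b 2 c.

Definition topCols (a b : nat) : seq nat := [seq c <- iota a (b - a).+1 | colTop a b c].

Definition aprime (a b : nat) : nat := head 0 (topCols a b).
Definition bprime (a b : nat) : nat := last 0 (topCols a b).

Definition label := ('I_n.+1 * 'I_n.+1)%type.

Definition child (x y : label) : bool :=
  let a := val x.1 in let b := val x.2 in
  [&& a <= b, k < 2 * (b - a + 1) &
    ((a < bprime a b) && (val y.1 == a) && (val y.2 == (bprime a b).-1))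
    || ((aprime a b < b) && (val y.1 == (aprime a b).+1) && (val y.2 == b))].

Definition root_label : label := (inord 1, inord n).

Definition DAG_nodes : {set label} := [set x | connect child root_label x].

End DAG.

(* Main.v *)
Require Import Defs.
From HB Require Import structures.
From mathcomp Require Import all_boot all_order.
From mathcomp Require Import zify.
Set Implicit Arguments. Unset Strict Implicit. Unset Printing Implicit Defensive.
Import Order.TTheory.

Section Aux.
Context {disp : Order.disp_t} {T : orderType disp}.
Variables (n k : nat) (A : nat -> nat -> T).

Lemma sum12 (F : nat -> nat) : \sum_(1 <= r < 3) F r = F 1 + F 2.
Proof. by rewrite big_ltn // big_ltn // big_geq // addn0. Qed.

Lemma nlarger_recr m b r c : m <= b.+1 ->
  nlarger A m b.+1 r c = nlarger A m b r c + ((A r c < A 1 b.+1)%O : nat)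
     + ((A r c < A 2 b.+1)%O : nat).
Proof.
move=> hm; rewrite /nlarger !sum12 !(big_nat_recr b.+1 _ _ hm) //=; lia.
Qed.

Lemma nlarger_recl m b r c : m <= b ->
  nlarger A m b r c = nlarger A m.+1 b r c + ((A r c < A 1 m)%O : nat)
     + ((A r c < A 2 m)%O : nat).
Proof.
move=> hm; rewrite /nlarger !sum12 !(@big_ltn _ _ _ m b.+1) //=; lia.
Qed.

Lemma nlarger_geq m b r c : b < m -> nlarger A m b r c = 0.
Proof. by move=> h; rewrite /nlarger sum12 !big_geq. Qed.

Lemma nlarger_incr m b r c : nlarger A m b r c <= nlarger A m b.+1 r c.
Proof.
case: (leqP m b.+1) => h; first by rewrite nlarger_recr //; lia.
by rewrite !nlarger_geq //; lia.
Qed.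

Lemma nlarger_decr m b r c : nlarger A m.+1 b r c <= nlarger A m b r c.
Proof.
case: (leqP m b) => h; first by rewrite (@nlarger_recl m) //; lia.
by rewrite !nlarger_geq //; lia.
Qed.

Lemma nlarger_mono a b a2 b2 r c : a <= a2 -> b2 <= b ->
  nlarger A a2 b2 r c <= nlarger A a b r c.
Proof.
move=> ha hb; apply: (@leq_trans (nlarger A a2 b r c)).
  exact: (homo_leq (f := fun b => nlarger A a2 b r c) leqnn (@leq_trans) (fun i => nlarger_incr a2 i r c)) _ _ hb.
pose g := fun i => nlarger A (a2 - i) b r c.
have hg : forall i, g i <= g i.+1.
  move=> i; rewrite /g; case: (leqP a2 i) => h.
    by have -> : a2 - i.+1 = a2 - i by lia.
  have -> : a2 - i = (a2 - i.+1).+1 by lia.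
  exact: nlarger_decr.
have := homo_leq (f := g) leqnn (@leq_trans) hg (leq0n (a2 - a)).
by rewrite /g subn0; have -> : a2 - (a2 - a) = a by lia.
Qed.

Lemma inTopk_mono a b a2 b2 r c : inTopk k A a b r c -> a <= a2 -> a2 <= c -> c <= b2 -> b2 <= b ->
  inTopk k A a2 b2 r c.
Proof.
rewrite /inTopk => /and3P[h1 h2 h3] ha hc1 hc2 hb.
rewrite h1 hc1 hc2 /=; exact: leq_ltn_trans (nlarger_mono r c ha hb) h3.
Qed.

Lemma colTop_mono a b a2 b2 c : colTop k A a b c -> a <= a2 -> a2 <= c -> c <= b2 -> b2 <= b ->
  colTop k A a2 b2 c.
Proof.
rewrite /colTop => /orP[h|h] *; apply/orP; [left|right]; exact: inTopk_mono h _ _ _ _.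
Qed.


Lemma seq_max (s : seq (nat * nat)) : s != [::] ->
  exists2 p, p \in s & forall q, q \in s -> (A q.1 q.2 <= A p.1 p.2)%O.
Proof.
elim: s => [//|x s IH] _.
case: s IH => [|y s] IH.
  by exists x => [|q]; rewrite ?inE // => /eqP ->.
have [p ps hp] := IH isT.
case: (leP (A x.1 x.2) (A p.1 p.2)) => h.
  exists p; first by rewrite inE ps orbT.
  by move=> q; rewrite inE => /orP[/eqP ->|/hp].
exists x; first by rewrite inE eqxx.
move=> q; rewrite inE => /orP[/eqP ->//|/hp hq].
exact: le_trans hq (ltW h).
Qed.

Lemma mem_topCols a b c : a <= b -> (c \in topCols k A a b) = (a <= c <= b) && colTop k A a b c.
Proof.
move=> hab; rewrite /topCols mem_filter mem_iota andbC; congr (_ && _).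
apply/idP/idP => /andP[h1 h2]; apply/andP; split => //; lia.
Qed.

Lemma topCols_ne a b : 0 < k -> a <= b -> exists c, c \in topCols k A a b.
Proof.
move=> hk hab.
pose s := [seq (r, c) | r <- iota 1 2, c <- iota a (b - a).+1].
have sne : s != [::] by rewrite /s; case: (b - a).
have [p ps hp] := seq_max sne.
have [r [c [hr hc pE]]] : exists r c, [/\ r \in iota 1 2, c \in iota a (b - a).+1 & p = (r, c)].
  by move/allpairsP: ps => [[r c] /= [h1 h2 ->]]; exists r, c.
subst p.
exists c; rewrite mem_topCols //.
move: hc; rewrite mem_iota => hc.
have hc' : a <= c <= b by apply/andP; split; lia.
rewrite hc' /=.
have h0 : nlarger A a b r c = 0.
  rewrite /nlarger big1_seq // => r' /andP[_ hr'].
  rewrite big1_seq // => c' /andP[_ hc2].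
  have := hp (r', c'); rewrite /= => hq.
  have : (r', c') \in s by apply: allpairs_f => //; rewrite mem_index_iota in hc2 *; rewrite mem_iota; lia.
  by move/hq; rewrite leNgt => /negbTE ->.
move: hr; rewrite !inE => /orP[]/eqP E; subst r; rewrite /colTop /inTopk h0 hk hc' /= ?orbT //.
Qed.


Definition G (a b : nat) : bool :=
  [&& 1 <= a, a <= b, b <= n, (a == 1) || colTop k A a.-1 b a.-1
    & (b == n) || colTop k A a b.+1 b.+1].

Lemma aprime_mem a b : 0 < k -> a <= b -> aprime k A a b \in topCols k A a b.
Proof.
move=> hk hab; have [c hc] := topCols_ne hk hab.
rewrite /aprime; case: (topCols k A a b) hc => [//|x s] _; exact: mem_head.
Qed.

Lemma bprime_mem a b : 0 < k -> a <= b -> bprime k A a b \in topCols k A a b.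
Proof.
move=> hk hab; have [c hc] := topCols_ne hk hab.
rewrite /bprime; case: (topCols k A a b) hc => [//|x s] _; exact: mem_last.
Qed.

Lemma G_child (x y : label n) : 0 < k -> G (val x.1) (val x.2) -> child k A x y ->
  G (val y.1) (val y.2).
Proof.
move=> hk; rewrite /child /G.
set a := val x.1; set b := val x.2.
move=> /and5P[h1 h2 h3 hL hR] /and3P[_ _ /orP[/andP[/andP[hlt /eqP ->] /eqP ->]|/andP[/andP[hlt /eqP ->] /eqP ->]]].
- have := bprime_mem hk h2; rewrite mem_topCols // => /andP[hb hcol].
  set b' := bprime k A a b in hlt hb hcol *.
  have hb1 : b'.-1.+1 = b' by lia.
  rewrite h1 /= hb1; apply/and4P; split.
  + lia.
  + lia.
  + case/orP: hL => [->//|hL]; apply/orP; right.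
    apply: (colTop_mono hL); lia.
  + apply/orP; right; apply: (colTop_mono hcol); lia.
- have := aprime_mem hk h2; rewrite mem_topCols // => /andP[ha hcol].
  set a' := aprime k A a b in hlt ha hcol *.
  rewrite /= h3 hlt /=; apply/andP; split.
  + apply/orP; right; apply: (colTop_mono hcol); lia.
  + case/orP: hR => [->//|hR]; apply/orP; right.
    apply: (colTop_mono hR); lia.
Qed.

Lemma G_nodes (x : label n) : 0 < n -> 0 < k -> x \in DAG_nodes n k A -> G (val x.1) (val x.2).
Proof.
move=> hn hk; rewrite inE => /connectP[p hp ->].
have : G (val (root_label n).1) (val (root_label n).2).
  rewrite /root_label /G /= !inordK ?eqxx ?orbT ?andbT //; lia.
elim: p (root_label n) hp => [//|y p IH] z /= /andP[hzy hp] hz.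
apply: IH hp _; exact: G_child hz hzy.
Qed.

End Aux.

Lemma count_incr (f : nat -> nat) K : (forall b, f b <= f b.+1) ->
  forall N, \sum_(0 <= b < N) ((f b < K) && (f b < f b.+1) : nat) <= K.
Proof.
move=> hf N.
suff : \sum_(0 <= b < N) ((f b < K) && (f b < f b.+1) : nat) <= minn K (f N).
  by move/leq_trans; apply; exact: geq_minl.
elim: N => [|N IH]; first by rewrite big_geq.
rewrite big_nat_recr //=.
case: (boolP ((f N < K) && (f N < f N.+1))) => [/andP[h1 h2]|_] /=.
  move: IH; rewrite (minn_idPr (ltnW h1)) => IH.
  rewrite leq_min; apply/andP; split; lia.
rewrite addn0; apply: (leq_trans IH).
by rewrite leq_min geq_minl /=; apply: leq_trans (geq_minr _ _) (hf N).
Qed.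

Lemma count_decr (f : nat -> nat) K : (forall a, f a.+1 <= f a) ->
  forall N, \sum_(0 <= a < N) ((f a < K) && (f a < f a.-1) : nat) <= K.
Proof.
move=> hf N.
suff H : forall d M, \sum_(M <= a < M + d) ((f a < K) && (f a < f a.-1) : nat) <= minn K (f M.-1).
  by have := H N 0; rewrite add0n => /leq_trans; apply; exact: geq_minl.
elim=> [|d IH] M; first by rewrite addn0 big_geq.
rewrite big_ltn; last by lia.
have -> : M + d.+1 = M.+1 + d by lia.
have hM : f M <= f M.-1 by case: M {IH} => //= M; exact: hf.
have := IH M.+1; rewrite /= => IH'.
case: (boolP ((f M < K) && (f M < f M.-1))) => [/andP[h1 h2]|_] /=.
  move: IH'; rewrite (minn_idPr (ltnW h1)) => IH'.
  rewrite leq_min; apply/andP; split; lia.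
rewrite add0n; apply: (leq_trans IH').
by rewrite leq_min geq_minl /=; apply: leq_trans (geq_minr _ _) hM.
Qed.

Lemma sum_le0 (F : nat -> nat) K N : (forall i, F i <= if 0 < i then K else 0) ->
  \sum_(i < N.+1) F i <= N * K.
Proof.
move=> hF; rewrite big_ord_recl.
have := hF 0; rewrite /= leqn0 => /eqP ->; rewrite add0n.
apply: (@leq_trans (\sum_(i < N) K)); last by rewrite sum_nat_const card_ord.
by apply: leq_sum => i _; have := hF (bump 0 i); rewrite /bump /=.
Qed.

Lemma sum_leN (F : nat -> nat) K N : (forall i, F i <= if i < N then K else 0) ->
  \sum_(i < N.+1) F i <= N * K.
Proof.
move=> hF; rewrite big_ord_recr.
have := hF N; rewrite ltnn leqn0 => /eqP /= ->; rewrite addn0.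
apply: (@leq_trans (\sum_(i < N) K)); last by rewrite sum_nat_const card_ord.
by apply: leq_sum => i _; have := hF i; rewrite ltn_ord.
Qed.

Lemma sum_eq1 (j c N : nat) : \sum_(i < N) ((val i == j) * c) <= c.
Proof.
suff -> : \sum_(i < N) ((val i == j) * c) = (j < N) * c by case: (j < N); lia.
elim: N => [|N IH]; first by rewrite big_ord0.
rewrite big_ord_recr /= IH.
case: eqP => [->|hne]; first by rewrite ltnn ltnSn.
have -> : (j < N.+1) = (j < N) by apply/idP/idP; lia.
by rewrite mul0n addn0.
Qed.

Section Main.
Context {disp : Order.disp_t} {T : orderType disp}.
Variables (n k : nat) (A : nat -> nat -> T).

Definition P1 a b r : bool :=
  (nlarger A a.-1 b r a.-1 < k) && (nlarger A a.-1 b r a.-1 < nlarger A a.-1 b.+1 r a.-1).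
Definition P2 a b s : bool :=
  (nlarger A a b.+1 s b.+1 < k) && (nlarger A a b.+1 s b.+1 < nlarger A a.-1 b.+1 s b.+1).

Lemma colTopP a b c : colTop k A a b c ->
  exists r, [/\ (r == 1) || (r == 2), nlarger A a b r c < k & a <= c <= b].
Proof.
rewrite /colTop /inTopk => /orP[] /and3P[_ h1 h2]; [exists 1|exists 2]; split => //.
Qed.

Lemma G_bound a b : distinct_entries n A -> (G n k A a b : nat) <=
  ((a == 1) && (0 < b)) + ((b == n) && (0 < a)) + ((0 < a) && P1 a b 1) + ((0 < a) && P1 a b 2)
  + ((b < n) && P2 a b 1) + ((b < n) && P2 a b 2).
Proof.
move=> hd; case hG: (G n k A a b) => //=.
move: hG; rewrite /G => /and5P[h1 h2 h3 hL hR].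
case: (eqVneq a 1) => [ea|na]; first by rewrite ea /=; have -> : 0 < b by lia.
case: (eqVneq b n) => [eb|nb]; first by rewrite h1.
move: hL hR; rewrite (negbTE na) (negbTE nb) /= => /colTopP[r [hr hrk _]] /colTopP[s [hs hsk _]].
have hbn : b < n by lia.
have ha2 : 1 < a by lia.
have hne : A r a.-1 != A s b.+1.
  apply/eqP => /hd []; rewrite /valid_pos.
  - by case/orP: hr => /eqP ->; apply/andP; split => //; lia.
  - by case/orP: hs => /eqP ->; apply/andP; split => //; lia.
  - move=> _; lia.
rewrite h1 hbn /=.
case/orP: (lt_total hne) => hlt.
- have key : P1 a b r.
    rewrite /P1 hrk /= (@nlarger_recr _ _ A a.-1 b r a.-1); last by lia.
    case/orP: hs => /eqP E; subst s; rewrite hlt /=; lia.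
  by case/orP: hr => /eqP E; subst r; rewrite key /=; lia.
- have key : P2 a b s.
    rewrite /P2 hsk /= (@nlarger_recl _ _ A a.-1 b.+1 s b.+1); last by lia.
    rewrite prednK; last by lia.
    case/orP: hr => /eqP E; subst r; rewrite hlt /=; lia.
  by case/orP: hs => /eqP E; subst s; rewrite key /=; lia.
Qed.

End Main.

Theorem lemma5 (disp : Order.disp_t) (T : orderType disp)
  (n k : nat) (A : nat -> nat -> T) :
  0 < n -> 1 <= k -> distinct_entries n A ->
  #|DAG_nodes n k A| <= 6 * k * n.
Proof.
move=> hn hk hd.
have hsub : DAG_nodes n k A \subset [set x : label n | G n k A (val x.1) (val x.2)].
  by apply/subsetP => x hx; rewrite inE; exact: G_nodes.
apply: (leq_trans (subset_leq_card hsub)).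
rewrite -sum1dep_card big_mkcond /=.
rewrite (eq_bigr (fun x : label n => (G n k A (val x.1) (val x.2) : nat))); last first.
  by move=> x _; case: (G _ _ _ _ _).
rewrite -(pair_bigA _ (fun (i j : 'I_n.+1) => (G n k A (val i) (val j) : nat))) /=.
apply: (@leq_trans (\sum_(i < n.+1) \sum_(j < n.+1)
  (((val i == 1) && (0 < val j) : nat) + ((val j == n) && (0 < val i) : nat)
   + ((0 < val i) && P1 k A i j 1 : nat) + ((0 < val i) && P1 k A i j 2 : nat)
   + ((val j < n) && P2 k A i j 1 : nat) + ((val j < n) && P2 k A i j 2 : nat)))).
  by apply: leq_sum => i _; apply: leq_sum => j _; exact: G_bound.
under eq_bigr => i _ do rewrite !big_split /=.
rewrite !big_split /=.
have T1 : \sum_(i < n.+1) \sum_(j < n.+1) ((val i == 1) && (0 < val j) : nat) <= n.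
  apply: (@leq_trans (\sum_(i < n.+1) ((val i == 1) * n))); last exact: sum_eq1.
  apply: leq_sum => i _; rewrite mulnC; apply: (@sum_le0 (fun j => ((val i == 1) && (0 < j) : nat))) => j.
  by case: (val i == 1); case: (0 < j).
have T2 : \sum_(i < n.+1) \sum_(j < n.+1) ((val j == n) && (0 < val i) : nat) <= n.
  rewrite -[X in _ <= X]muln1; apply: (@sum_le0 (fun i => \sum_(j < n.+1) ((val j == n) && (0 < i) : nat))) => i.
  apply: (@leq_trans (\sum_(j < n.+1) ((val j == n) * (0 < i)))).
    by apply: leq_sum => j _; rewrite mulnb.
  by apply: leq_trans (sum_eq1 _ _ _) _; case: (0 < i).
have T3 : forall r, \sum_(i < n.+1) \sum_(j < n.+1) ((0 < val i) && P1 k A i j r : nat) <= n * k.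
  move=> r; apply: (@sum_le0 (fun i => \sum_(j < n.+1) ((0 < i) && P1 k A i j r : nat))) => i; case: (0 < i) => /=; last by rewrite big1.
  rewrite -(big_mkord xpredT (fun j => (P1 k A i j r : nat))).
  by apply: count_incr => b; exact: nlarger_incr.
have T5 : forall s, \sum_(i < n.+1) \sum_(j < n.+1) ((val j < n) && P2 k A i j s : nat) <= n * k.
  move=> s; rewrite exchange_big /=; apply: (@sum_leN (fun j => \sum_(i < n.+1) ((j < n) && P2 k A i j s : nat))) => j; case: (j < n) => /=; last by rewrite big1.
  rewrite -(big_mkord xpredT (fun i => (P2 k A i j s : nat))).
  by apply: count_decr => a; exact: nlarger_decr.
apply: (leq_trans (leq_add (leq_add (leq_add (leq_add (leq_add T1 T2) (T3 1)) (T3 2)) (T5 1)) (T5 2))).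
nia.
Qed.
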